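(* Let $m\ge1$, $n\ge1$, $N>2n$, let $\Sigma_0,\dots,\Sigma_n\in\mathbb R^{m\times m}$ and let $\mathbf T_n$ be the block-Toeplitz matrix whose $(i,j)$ block ($i,j=0,\dots,n$) is $\Sigma_{i-j}$ if $i\ge j$ and $\Sigma_{j-i}^\top$ if $i<j$. Assume there exists a symmetric positive definite $mN\times mN$ matrix $\bar{\boldsymbol\Sigma}_N$ with $E_n^\top\bar{\boldsymbol\Sigma}_NE_n=\mathbf T_n$ and $\mathbf U_N^\top\bar{\boldsymbol\Sigma}_N\mathbf U_N=\bar{\boldsymbol\Sigma}_N$. Then for every $(\Lambda,\Theta)\in\mathcal L_+$, $$J(\Lambda,\Theta)\ge mN+\log\det\bar{\boldsymbol\Sigma}_N,$$ where $J(\Lambda,\Theta)=\operatorname{Tr}(\Lambda\mathbf T_n)-\log\det(E_n\Lambda E_n^\top+\mathbf U_N\Theta\mathbf U_N^\top-\Theta)$.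
   Context: $\mathfrak S_k$ denotes the space of real symmetric $mk\times mk$ matrices. $E_n$ is the $mN\times m(n+1)$ matrix with $N\times(n+1)$ blocks of size $m\times m$ whose $(i,i)$ blocks ($i=1,\dots,n+1$) are $I_m$ and other blocks $0$. $\mathbf U_N$ is the $mN\times mN$ block shift matrix whose $(i,i+1)$ blocks ($i=1,\dots,N-1$) and $(N,1)$ block are $I_m$, others $0$. The linear map $A:\mathfrak S_{n+1}\times\mathfrak S_N\to\mathfrak S_N$ is $A(\Lambda,\Theta)=E_n\Lambda E_n^\top+\mathbf U_N\Theta\mathbf U_N^\top-\Theta$, and $\mathcal L_+=\{(\Lambda,\Theta)\in(\ker A)^\perp:A(\Lambda,\Theta)>0\}$, orthogonality being with respect to $\langle(\Lambda_1,\Theta_1),(\Lambda_2,\Theta_2)\rangle=\operatorname{Tr}(\Lambda_1\Lambda_2)+\operatorname{Tr}(\Theta_1\Theta_2)$. *)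

(* Defs.v *)
From mathcomp Require Import all_boot all_order all_algebra.
From mathcomp Require Import reals exp.
Import Order.TTheory GRing.Theory Num.Theory.
Local Open Scope ring_scope.

(* Block convention: an index k : 'I_(m * K) of an (m K)-dimensional block
   vector lies in block (k %/ m) (0-based) at position (k %% m) in that block. *)

Definition symm {R : realType} {d : nat} (A : 'M[R]_d) : Prop := A^T = A.

Definition posdef {R : realType} {d : nat} (A : 'M[R]_d) : Prop :=
  A^T = A /\ forall v : 'cV[R]_d, v != 0 -> 0 < (v^T *m A *m v) 0 0.

(* E_n : mN x m(n+1), block (i,i) = I_m for i = 0..n, other blocks 0. *)
Definition Emat {R : realType} (m N n : nat) : 'M[R]_(m * N, m * n.+1) :=
  \matrix_(k, l) ((k %/ m == l %/ m)%N && (k %% m == l %% m)%N)%:R.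

(* U_N : mN x mN block shift; block (i, i+1) for i = 0..N-2 and block (N-1, 0)
   are I_m (0-based), others 0. *)
Definition Umat {R : realType} (m N : nat) : 'M[R]_(m * N) :=
  \matrix_(k, l) ((l %/ m == (k %/ m).+1 %% N)%N && (k %% m == l %% m)%N)%:R.

(* Entry (a,b) of an m x m matrix, indexed by naturals (0 out of range;
   only used with a, b < m). *)
Definition ent {R : realType} {m : nat} (A : 'M[R]_m) (a b : nat) : R :=
  match (insub a : option 'I_m), (insub b : option 'I_m) with
  | Some i, Some j => A i j
  | _, _ => 0
  end.

Definition Tmat {R : realType} (m n : nat) (Sigma : nat -> 'M[R]_m)
  : 'M[R]_(m * n.+1) :=
  \matrix_(k, l)
    (if (l %/ m <= k %/ m)%N
     then ent (Sigma (k %/ m - l %/ m)%N) (k %% m)%N (l %% m)%N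
     else ent (Sigma (l %/ m - k %/ m)%N)^T (k %% m)%N (l %% m)%N).

Definition Aop {R : realType} (m N n : nat)
  (Lam : 'M[R]_(m * n.+1)) (Th : 'M[R]_(m * N)) : 'M[R]_(m * N) :=
  Emat m N n *m Lam *m (Emat m N n)^T + Umat m N *m Th *m (Umat m N)^T - Th.

Definition in_kerA_perp {R : realType} (m N n : nat)
  (Lam : 'M[R]_(m * n.+1)) (Th : 'M[R]_(m * N)) : Prop :=
  symm Lam /\ symm Th /\
  forall (Lam' : 'M[R]_(m * n.+1)) (Th' : 'M[R]_(m * N)),
    symm Lam' -> symm Th' -> Aop m N n Lam' Th' = 0 ->
    \tr (Lam *m Lam') + \tr (Th *m Th') = 0.

Definition Lplus {R : realType} (m N n : nat)
  (Lam : 'M[R]_(m * n.+1)) (Th : 'M[R]_(m * N)) : Prop :=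
  in_kerA_perp m N n Lam Th /\ posdef (Aop m N n Lam Th).

Definition Jfun {R : realType} (m N n : nat) (Sigma : nat -> 'M[R]_m)
  (Lam : 'M[R]_(m * n.+1)) (Th : 'M[R]_(m * N)) : R :=
  \tr (Lam *m Tmat m n Sigma) - ln (\det (Aop m N n Lam Th)).

(* Main.v *)
Require Import Defs.
From mathcomp Require Import all_boot all_order all_algebra.
From mathcomp Require Import reals exp.
From mathcomp.algebra_tactics Require Import ring lra.
Import Order.TTheory GRing.Theory Num.Theory.
Local Open Scope ring_scope.

Section S.
Variable R : realType.

Lemma posdef_cong d (S P : 'M[R]_d) : posdef S -> P \in unitmx -> posdef (P^T *m S *m P).
Proof.
move=> [HS Hp] HP; split.
  by rewrite !trmx_mul trmxK HS mulmxA.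
move=> v v0.
have Pv0 : P *m v != 0.
  apply: contraNneq v0 => H.
  by rewrite -(mulKmx HP v) H mulmx0.
have := Hp _ Pv0. by rewrite trmx_mul !mulmxA.
Qed.

Lemma posdef_sub k (M : 'M[R]_(1 + k)) :
  posdef M -> posdef (drsubmx M) /\ 0 < ulsubmx M 0 0.
Proof.
move=> [HS Hp]; split; first split.
- by rewrite trmx_drsub HS.
- move=> w w0.
  have c0 : col_mx (0 : 'cV_1) w != 0.
    by apply: contraNneq w0 => H; have [] := eq_col_mx (etrans H (esym (col_mx0 _ _ _ _))) => _ ->.
  have := Hp _ c0.
  by rewrite -{1}(submxK M) tr_col_mx mul_row_block trmx0 !mul0mx !add0r mul_row_col mulmx0 add0r.
- have c0 : col_mx (1 : 'cV[R]_1) (0 : 'cV[R]_k) != 0.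
    by apply/negP => /eqP H; have [/eqP] := eq_col_mx (etrans H (esym (col_mx0 _ _ _ _))); rewrite oner_eq0.
  have := Hp _ c0.
  rewrite -{1}(submxK M) tr_col_mx mul_row_block !trmx0 !mul0mx !addr0 mul_row_col mulmx0 addr0.
  by rewrite trmx1 mul1mx mulmx1.
Qed.
Arguments posdef_sub {k M}.

Lemma detL k (v : 'rV[R]_k) : \det (block_mx (1%:M : 'M[R]_1) v 0 1%:M) = 1.
Proof. by rewrite det_ublock !det1 mulr1. Qed.

Lemma Lunit k (v : 'rV[R]_k) : block_mx (1%:M : 'M[R]_1) v 0 1 \in unitmx.
Proof. by rewrite unitmxE detL unitr1. Qed.

Lemma decomp k (S : 'M[R]_(1+k)) : posdef S -> drsubmx S \in unitmx ->
  exists (v : 'rV[R]_k) (s : 'M[R]_1),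
   [/\ S = block_mx 1%:M v 0 1%:M *m block_mx s 0 0 (drsubmx S) *m (block_mx 1%:M v 0 1%:M)^T,
       0 < s 0 0 & s 0 0 <= ulsubmx S 0 0].
Proof.
move=> HSp HU; have [HS Hp] := HSp.
set S2 := drsubmx S; set u := ursubmx S.
have HS' := HS; rewrite -{1}(submxK S) tr_block_mx in HS'.
have [Hul Hur Hdl Hdr] := eq_block_mx (etrans HS' (esym (submxK S))).
set v := u *m invmx S2.
have vS2 : v *m S2 = u by rewrite /v mulmxKV.
have S2v : S2 *m v^T = dlsubmx S.
  by rewrite /v trmx_mul trmx_inv Hdr mulmxA mulmxV // mul1mx Hdl.
set s := ulsubmx S - v *m S2 *m v^T.
have E : S = block_mx 1%:M v 0 1%:M *m block_mx s 0 0 S2 *m (block_mx 1%:M v 0 1%:M)^T.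
  rewrite tr_block_mx !trmx1 trmx0 !mulmx_block.
  rewrite !(mul1mx, mul0mx, mulmx0, addr0, add0r, mulmx1).
  by rewrite /s subrK vS2 S2v submxK.
set Linv := block_mx (1%:M : 'M[R]_1) (-v) 0 1%:M.
have LL : Linv *m block_mx 1%:M v 0 1%:M = 1%:M.
  rewrite /Linv mulmx_block !(mul1mx, mul0mx, mulmx0, addr0, add0r, mulmx1) subrr.
  by rewrite -scalar_mx_block.
have HD : posdef (block_mx s 0 0 S2).
  have -> : block_mx s 0 0 S2 = Linv^T^T *m S *m Linv^T.
    rewrite trmxK {1}E !mulmxA LL mul1mx -!mulmxA -trmx_mul LL trmx1 mulmx1 //.
  by apply: posdef_cong => //; rewrite unitmx_tr Lunit.
have [_] := posdef_sub HD; rewrite block_mxKul => s0.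
exists v, s; split => //.
rewrite /s; set X := v *m S2 *m v^T; rewrite !mxE gerDl oppr_le0 /X.
have [HS2 _] := posdef_sub HSp.
have [/eqP ->|nz] := boolP (v^T == 0).
  by rewrite big1 // => j _; rewrite !mxE mulr0.
by have := HS2.2 _ nz; rewrite trmxK mxE => /ltW.
Qed.
Arguments decomp {k S}.

Lemma det_pos d (S : 'M[R]_d) : posdef S -> 0 < \det S.
Proof.
elim: d S => [|k IH]; first by move=> S _; rewrite det_mx00.
change (forall S : 'M[R]_(1 + k), posdef S -> 0 < \det S) => S HS.
have HS' := HS.
have HU : drsubmx (S : 'M[R]_(1 + k)) \in unitmx.
  by rewrite unitmxE unitfE gt_eqF // (IH _ (posdef_sub HS').1).
have [v [s [E s0 _]]] := decomp HS' HU.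
rewrite [S]E !det_mulmx det_tr detL (det_ublock s 0 (drsubmx S)) det_mx11 mul1r mulr1.
by rewrite mulr_gt0 // (IH _ (posdef_sub HS').1).
Qed.
Arguments det_pos {d S}.

Lemma fischer k (B : 'M[R]_(1 + k)) : posdef B ->
  \det B <= ulsubmx B 0 0 * \det (drsubmx B).
Proof.
move=> HB.
have HU : drsubmx B \in unitmx.
  by rewrite unitmxE unitfE gt_eqF // (det_pos (posdef_sub HB).1).
have [v [s [E s0 sle]]] := decomp HB HU.
rewrite {1}E !det_mulmx det_tr detL det_ublock det_mx11 mul1r mulr1.
by rewrite ler_wpM2r // ltW // (det_pos (posdef_sub HB).1).
Qed.
Arguments fischer {k B}.

Lemma lnle {x : R} : 0 < x -> 1 + ln x <= x.
Proof.
move=> x0; have H := @le_ln1Dx R (x - 1).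
rewrite (_ : 1 + (x - 1) = x) in H; last by ring.
have h1 : -1 < x - 1 by lra.
have := H h1; lra.
Qed.

Lemma main_ineq d (A S : 'M[R]_d) : posdef A -> posdef S ->
  d%:R + ln (\det A) + ln (\det S) <= \tr (A *m S).
Proof.
elim: d A S => [|k IH].
  by move=> A S _ _; rewrite !det_mx00 ln1 /mxtrace big_ord0 !addr0.
change (forall A S : 'M[R]_(1 + k), posdef A -> posdef S ->
  (1 + k)%:R + ln (\det A) + ln (\det S) <= \tr (A *m S)) => A S HA HS.
have HU : drsubmx S \in unitmx.
  by rewrite unitmxE unitfE gt_eqF // (det_pos (posdef_sub HS).1).
have [v [s [E s0 _]]] := decomp HS HU.
set L := block_mx (1%:M : 'M[R]_1) v 0 1%:M.
set B := L^T *m A *m L.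
have HB : posdef B by apply: posdef_cong => //; apply: Lunit.
have dB : \det B = \det A by rewrite /B !det_mulmx det_tr detL mulr1 mul1r.
have dS : \det S = s 0 0 * \det (drsubmx S).
  by rewrite {1}E !det_mulmx det_tr detL det_ublock det_mx11 mul1r mulr1.
have tr : \tr (A *m S) = ulsubmx B 0 0 * s 0 0 + \tr (drsubmx B *m drsubmx S).
  rewrite {1}E !mulmxA mxtrace_mulC !mulmxA -/B.
  rewrite -{1}(submxK B) mulmx_block mxtrace_block !mulmx0 !addr0.
  by rewrite add0r /mxtrace big_ord1 mxE big_ord1.
have IH' := IH _ _ (posdef_sub HB).1 (posdef_sub HS).1.
have F := fischer HB.
have b0 := (posdef_sub HB).2.
have pB := det_pos (posdef_sub HB).1.
have pS := det_pos (posdef_sub HS).1.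
have pBB := det_pos HB.
have lnA : ln (\det A) <= ln (ulsubmx B 0 0) + ln (\det (drsubmx B)).
  rewrite -dB -lnM ?posrE // ?mulr_gt0 //.
  by rewrite ler_ln ?posrE // ?mulr_gt0.
have lnS : ln (\det S) = ln (s 0 0) + ln (\det (drsubmx S)).
  by rewrite dS lnM ?posrE.
have lbs := lnle (mulr_gt0 b0 s0 : 0 < ulsubmx B 0 0 * s 0 0).
rewrite lnM ?posrE // in lbs.
rewrite tr lnS natrD.
lra.
Qed.
End S.

Theorem lemma3 (R : realType) (m n N : nat) (Sigma : nat -> 'M[R]_m)
  (SigmaBar : 'M[R]_(m * N)) :
  (1 <= m)%N -> (1 <= n)%N -> (2 * n < N)%N ->
  posdef SigmaBar ->
  (Emat m N n)^T *m SigmaBar *m Emat m N n = Tmat m n Sigma ->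
  (Umat m N)^T *m SigmaBar *m Umat m N = SigmaBar ->
  forall (Lam : 'M[R]_(m * n.+1)) (Th : 'M[R]_(m * N)),
    Lplus m N n Lam Th ->
    (m * N)%:R + ln (\det SigmaBar) <= Jfun m N n Sigma Lam Th.
Proof.
move=> _ _ _ HS HE HU Lam Th [_ HA].
have Hm := @main_ineq R _ _ _ HA HS.
have Ht : \tr (Lam *m Tmat m n Sigma) = \tr (Aop m N n Lam Th *m SigmaBar).
  rewrite -HE /Aop !mulmxDl mulNmx !mxtraceD raddfN /=.
  have h1 : \tr (Emat m N n *m Lam *m (Emat m N n)^T *m SigmaBar) =
      \tr (Lam *m ((Emat m N n)^T *m SigmaBar *m Emat m N n)).
    by rewrite -!mulmxA mxtrace_mulC !mulmxA.
  have h2 : \tr (Umat m N *m Th *m (Umat m N)^T *m SigmaBar) = \tr (Th *m SigmaBar).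
    by rewrite -!mulmxA mxtrace_mulC -mulmxA HU.
  by rewrite h1 h2 addrK.
rewrite /Jfun Ht; lra.
Qed.
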